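(* Let $\tau$ be a distributive triangle function on $\Delta^+$, $\Sigma$ a ring of subsets of $\Omega\ne\emptyset$, $\gamma$ a $\tau$-decomposable measure on $\Sigma$, and $E\in\Sigma$ with $\gamma_E=\varepsilon_0$. Then $\int_E f\,d\gamma=\varepsilon_0$ for every measurable $f:\Omega\to[0,+\infty]$ that is $\gamma$-integrable on $E$ (in particular for every simple function).
   Context: $\Delta^+$: functions $F:[-\infty,+\infty]\to[0,1]$ non-decreasing, left-continuous on $\mathbb{R}$, $F(x)=0$ for $x\le0$, $F(+\infty)=1$, ordered pointwise; $\varepsilon_0(x)=1$ if $x>0$, else $0$. Triangle function: symmetric, associative $\tau:\Delta^+\times\Delta^+\to\Delta^+$, non-decreasing in each variable, identity $\varepsilon_0$; $G\oplus H=\tau(G,H)$, $\bigoplus_{k=1}^nG_k=\tau(G_1,\bigoplus_{k=2}^nG_k)$. $c\odot G=\varepsilon_0$ if $c=0$, $(c\odot G)(x)=G(x/c)$ if $c>0$; $\tau$ distributive if $c\odot(G\oplus H)=(c\odot G)\oplus(c\odot H)$ for all $c\ge0$. $\tau$-decomposable measure: $\gamma:\Sigma\to\Delta^+$, $\gamma_\emptyset=\varepsilon_0$, $\gamma_{A\cup B}=\tau(\gamma_A,\gamma_B)$ for disjoint $A,B\in\Sigma$. Simple function $\sum_{i=1}^nx_i\chi_{E_i}$ ($x_i\in[0,\infty)$, $E_i\in\Sigma$ pairwise disjoint), $\int_Ef\,d\gamma=\bigoplus_ix_i\odot\gamma_{E\cap E_i}$. Measurable: pointwise limit of simple functions. $\mathcal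 S_{f,E}$: simple $\mathfrak f\le f$ on $E$. $f$ is $\gamma$-integrable on $E$ if some $H\in\Delta^+$ satisfies $\int_E\mathfrak f\,d\gamma\ge H$ for all $\mathfrak f\in\mathcal S_{f,E}$; then $\int_Ef\,d\gamma=\inf\{\int_E\mathfrak f\,d\gamma:\mathfrak f\in\mathcal S_{f,E}\}$ in $(\Delta^+,\le)$. *)

(* Defs.v *)
From Stdlib Require Import Reals Lra List ClassicalDescription.
From Coquelicot Require Import Coquelicot.
Open Scope R_scope.

(* Distribution functions are represented as raw maps [-oo,+oo] -> R;
   membership in Delta^+ is a predicate. *)
Definition dfun := Rbar -> R.

Definition in_Dplus (F : dfun) : Prop :=
  (forall x, 0 <= F x <= 1) /\
  (forall x y, Rbar_le x y -> F x <= F y) /\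
  (forall x : R, forall eps, 0 < eps -> exists delta, 0 < delta /\
       forall y : R, x - delta < y < x -> Rabs (F (Finite y) - F (Finite x)) < eps) /\
  (forall x, Rbar_le x (Finite 0) -> F x = 0) /\
  F p_infty = 1.

Definition dle (F G : dfun) : Prop := forall x, F x <= G x.

Definition eps0 : dfun := fun x => if Rbar_lt_dec (Finite 0) x then 1 else 0.

Definition Rbar_divr (x : Rbar) (c : R) : Rbar :=
  match x with
  | Finite r => Finite (r / c)
  | p_infty => p_infty
  | m_infty => m_infty
  end.

Definition dscale (c : R) (G : dfun) : dfun :=
  if Req_EM_T c 0 then eps0 else fun x => G (Rbar_divr x c).

Definition is_triangle_function (tau : dfun -> dfun -> dfun) : Prop :=
  (forall G H, in_Dplus G -> in_Dplus H -> in_Dplus (tau G H)) /\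
  (forall G H, in_Dplus G -> in_Dplus H -> tau G H = tau H G) /\
  (forall G H K, in_Dplus G -> in_Dplus H -> in_Dplus K ->
     tau G (tau H K) = tau (tau G H) K) /\
  (forall G G' H, in_Dplus G -> in_Dplus G' -> in_Dplus H ->
     dle G G' -> dle (tau G H) (tau G' H)) /\
  (forall G H H', in_Dplus G -> in_Dplus H -> in_Dplus H' ->
     dle H H' -> dle (tau G H) (tau G H')) /\
  (forall G, in_Dplus G -> tau G eps0 = G).

Definition is_distributive (tau : dfun -> dfun -> dfun) : Prop :=
  forall c G H, 0 <= c -> in_Dplus G -> in_Dplus H ->
    dscale c (tau G H) = tau (dscale c G) (dscale c H).

Definition bigoplus (tau : dfun -> dfun -> dfun) (l : list dfun) : dfun :=
  fold_right tau eps0 l.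

Definition set_empty {Om : Type} : Om -> Prop := fun _ => False.
Definition set_union {Om : Type} (A B : Om -> Prop) : Om -> Prop := fun w => A w \/ B w.
Definition set_inter {Om : Type} (A B : Om -> Prop) : Om -> Prop := fun w => A w /\ B w.
Definition set_diff {Om : Type} (A B : Om -> Prop) : Om -> Prop := fun w => A w /\ ~ B w.
Definition disjoint {Om : Type} (A B : Om -> Prop) : Prop := forall w, ~ (A w /\ B w).

Definition is_ring_of_sets {Om : Type} (Sigma : (Om -> Prop) -> Prop) : Prop :=
  Sigma set_empty /\
  (forall A B, Sigma A -> Sigma B -> Sigma (set_union A B)) /\
  (forall A B, Sigma A -> Sigma B -> Sigma (set_diff A B)).

Definition is_decomposable_measure {Om : Type} (tau : dfun -> dfun -> dfun)
  (Sigma : (Om -> Prop) -> Prop) (gamma : (Om -> Prop) -> dfun) : Prop :=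
  (forall A, Sigma A -> in_Dplus (gamma A)) /\
  gamma set_empty = eps0 /\
  (forall A B, Sigma A -> Sigma B -> disjoint A B ->
     gamma (set_union A B) = tau (gamma A) (gamma B)).

(* A simple function, given by its representation [(x_1,E_1);...;(x_n,E_n)]
   with x_i in [0,oo), E_i in Sigma pairwise disjoint. *)
Definition simple_rep {Om : Type} (Sigma : (Om -> Prop) -> Prop)
  (s : list (R * (Om -> Prop))) : Prop :=
  (forall p, In p s -> 0 <= fst p /\ Sigma (snd p)) /\
  (forall i j, (i < j < length s)%nat ->
     disjoint (snd (nth i s (0, set_empty))) (snd (nth j s (0, set_empty)))).

Definition simple_val {Om : Type} (s : list (R * (Om -> Prop))) (w : Om) : R :=
  fold_right (fun p acc =>
    (if excluded_middle_informative (snd p w) then fst p else 0) + acc) 0 s.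

Definition simple_integral {Om : Type} (tau : dfun -> dfun -> dfun)
  (gamma : (Om -> Prop) -> dfun) (E : Om -> Prop) (s : list (R * (Om -> Prop))) : dfun :=
  bigoplus tau (map (fun p => dscale (fst p) (gamma (set_inter E (snd p)))) s).

Definition measurable_fun_ {Om : Type} (Sigma : (Om -> Prop) -> Prop) (f : Om -> Rbar) : Prop :=
  exists u : nat -> list (R * (Om -> Prop)),
    (forall n, simple_rep Sigma (u n)) /\
    (forall w, is_lim_seq (fun n => simple_val (u n) w) (f w)).

Definition in_S {Om : Type} (Sigma : (Om -> Prop) -> Prop) (f : Om -> Rbar)
  (E : Om -> Prop) (s : list (R * (Om -> Prop))) : Prop :=
  simple_rep Sigma s /\ forall w, E w -> Rbar_le (Finite (simple_val s w)) (f w).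

Definition integrable {Om : Type} (tau : dfun -> dfun -> dfun)
  (Sigma : (Om -> Prop) -> Prop) (gamma : (Om -> Prop) -> dfun)
  (f : Om -> Rbar) (E : Om -> Prop) : Prop :=
  exists H, in_Dplus H /\
    forall s, in_S Sigma f E s -> dle H (simple_integral tau gamma E s).

Definition integral_is {Om : Type} (tau : dfun -> dfun -> dfun)
  (Sigma : (Om -> Prop) -> Prop) (gamma : (Om -> Prop) -> dfun)
  (f : Om -> Rbar) (E : Om -> Prop) (G : dfun) : Prop :=
  in_Dplus G /\
  (forall s, in_S Sigma f E s -> dle G (simple_integral tau gamma E s)) /\
  (forall H, in_Dplus H ->
     (forall s, in_S Sigma f E s -> dle H (simple_integral tau gamma E s)) -> dle H G).

(* Main.v *)
Require Import Defs.
From Stdlib Require Import Reals Lra Lia List Classical FunctionalExtensionality PropExtensionality.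
From Coquelicot Require Import Coquelicot.
Open Scope R_scope.

Lemma eps0_top (F : dfun) : in_Dplus F -> dle F eps0.
Proof.
  intros [H1 [_ [_ [H4 _]]]] x. unfold eps0.
  destruct (Rbar_lt_dec (Finite 0) x) as [h|h].
  - apply H1.
  - rewrite H4. lra. destruct x as [r| |]; simpl in *; auto; lra.
Qed.

Lemma dle_antisym F G : dle F G -> dle G F -> F = G.
Proof. intros a b; apply functional_extensionality; intro x; apply Rle_antisym; auto. Qed.

Lemma sets_eq {Om : Type} (A B : Om -> Prop) : (forall w, A w <-> B w) -> A = B.
Proof. intro h; apply functional_extensionality; intro w; apply propositional_extensionality; auto. Qed.

Lemma dscale_eps0 c : 0 <= c -> dscale c eps0 = eps0.
Proof.
  intro hc. unfold dscale. destruct (Req_EM_T c 0) as [e|e]; auto.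
  apply functional_extensionality; intro x. unfold eps0.
  assert (cp : 0 < c) by lra.
  destruct (Rbar_lt_dec (Finite 0) (Rbar_divr x c)) as [h|h];
  destruct (Rbar_lt_dec (Finite 0) x) as [h'|h']; auto; exfalso;
  destruct x as [r| |]; simpl in *; auto.
  - apply h'. destruct (Rle_or_lt r 0); auto.
    assert (r / c <= 0). { unfold Rdiv. apply Rmult_le_0_r; auto. left; apply Rinv_0_lt_compat; auto. } lra.
  - apply h. unfold Rdiv. apply Rmult_lt_0_compat; auto. apply Rinv_0_lt_compat; auto.
Qed.

Theorem theorem4p12 (Om : Type) (tau : dfun -> dfun -> dfun)
  (Sigma : (Om -> Prop) -> Prop) (gamma : (Om -> Prop) -> dfun) (E : Om -> Prop) :
  inhabited Om ->
  is_triangle_function tau -> is_distributive tau ->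
  is_ring_of_sets Sigma ->
  is_decomposable_measure tau Sigma gamma ->
  Sigma E -> gamma E = eps0 ->
  forall f : Om -> Rbar,
    (forall w, Rbar_le (Finite 0) (f w)) ->
    measurable_fun_ Sigma f ->
    integrable tau Sigma gamma f E ->
    integral_is tau Sigma gamma f E eps0.
Proof.
  intros _ Htau _ [R0 [RU RD]] [Gd [G0 GU]] SE GE f fpos _ _.
  destruct Htau as [T1 [T2 [T3 [T4 [T5 T6]]]]].
  assert (De : in_Dplus eps0) by (rewrite <- GE; auto).
  assert (Key : forall A, Sigma A -> gamma (set_inter E A) = eps0).
  { intros A SA.
    assert (SI : Sigma (set_inter E A)).
    { replace (set_inter E A) with (set_diff E (set_diff E A)); [apply RD; auto|].
      apply sets_eq; intro w; unfold set_diff, set_inter; split.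
      - intros [h1 h2]; split; auto. apply NNPP; intro; apply h2; auto.
      - intros [h1 h2]; split; auto. intros [_ h]; auto. }
    assert (SDf : Sigma (set_diff E A)) by auto.
    assert (Eq : E = set_union (set_inter E A) (set_diff E A)).
    { apply sets_eq; intro w; unfold set_union, set_inter, set_diff; split.
      - intro h; destruct (classic (A w)); auto.
      - intros [[h _]|[h _]]; auto. }
    assert (Hd : disjoint (set_inter E A) (set_diff E A)).
    { intros w [[_ a] [_ b]]; auto. }
    pose proof (GU _ _ SI SDf Hd) as HU. rewrite <- Eq, GE in HU.
    apply dle_antisym; [apply eps0_top; auto|].
    rewrite HU. rewrite <- (T6 (gamma (set_inter E A))) at 2 by auto.
    apply T5; auto. apply eps0_top; auto. }
  assert (SI0 : forall s, simple_rep Sigma s -> simple_integral tau gamma E s = eps0).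
  { intros s [Hs _]. unfold simple_integral, bigoplus.
    induction s as [|p s IH]; simpl; auto.
    rewrite IH by (intros q hq; apply Hs; simpl; auto).
    destruct (Hs p (or_introl eq_refl)) as [h1 h2].
    rewrite Key, dscale_eps0; auto. }
  split; [auto|split].
  - intros s [Hs _]. rewrite SI0; auto. intro; lra.
  - intros H HH Hall.
    assert (S0 : in_S Sigma f E nil).
    { split.
      - split; [intros p []|]. intros i j h; simpl in h; lia.
      - intros w _; simpl; apply fpos. }
    specialize (Hall _ S0). rewrite SI0 in Hall; auto. apply S0.
Qed.
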